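(* Let $G$ be an antimatroid on a ground set $S$ with $|S|=n$, and write its Tutte polynomial as $T(G;x,y)=\sum_{i,j}b_{i,j}x^iy^j$. For $i,j\ge0$ let $a_{i,j}$ be the number of convex sets $C$ of $G$ with $|C|=i$ and $|\mathrm{int}(C)|=j$. Then $$b_{i,j}=\sum_{s=i}^{n}(-1)^{s-i}\binom{s}{i}a_{s,j}.$$
   Context: An antimatroid on a finite set $S$ is a family $\mathcal{F}\subseteq 2^S$ of feasible sets with $\emptyset\in\mathcal{F}$, $S\in\mathcal{F}$, $F_1\cup F_2\in\mathcal{F}$ whenever $F_1,F_2\in\mathcal{F}$, and accessible: every nonempty $F\in\mathcal{F}$ contains some $x$ with $F\setminus\{x\}\in\mathcal{F}$. Its rank function is $r(A)=\max\{|F|:F\in\mathcal{F},F\subseteq A\}$ (so $r(S)=|S|$), and its Tutte polynomial is $T(G;x,y)=\sum_{A\subseteq S}(x-1)^{r(S)-r(A)}(y-1)^{|A|-r(A)}$. A set $C$ is convex if $S\setminus C\in\mathcal{F}$; convex sets are closed under intersection, and the convex closure $\overline{A}$ of $A$ is the smallest convex set containing $A$. For convex $C$, $p\in C$ is extreme if $p\notin\overline{C\setminus\{p\}}$; $\mathrm{int}(C)$ is the set of non-extreme points of $C$. *)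

(* Defs.v *)
From mathcomp Require Import all_boot all_order all_algebra.
Set Implicit Arguments. Unset Strict Implicit. Unset Printing Implicit Defensive.
Import GRing.Theory Num.Theory.
Local Open Scope ring_scope.

Section Antimatroid.
Variable S : finType.
Implicit Types (F : {set {set S}}) (A C : {set S}).

Definition is_antimatroid F : Prop :=
  [/\ set0 \in F, [set: S] \in F,
      (forall X1 X2 : {set S}, X1 \in F -> X2 \in F -> X1 :|: X2 \in F) &
      (forall X : {set S}, X \in F -> X != set0 -> exists2 x, x \in X & X :\ x \in F)].

Definition am_rank F A : nat := \max_(X in F | X \subset A) #|X|.

(* Tutte polynomial as a polynomial in x with coefficients polynomials in y:
   T(x,y) = sum_A (x-1)^(r(S)-r(A)) (y-1)^(|A|-r(A)). *)
Definition am_tutte F : {poly {poly int}} :=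
  \sum_(A : {set S})
     ('X - 1) ^+ (am_rank F [set: S] - am_rank F A)%N
     * (('X - 1) ^+ (#|A| - am_rank F A)%N)%:P.

Definition tutte_coef F (i j : nat) : int := ((am_tutte F)`_i)`_j.

Definition convex F C : bool := ~: C \in F.

Definition cclosure F A : {set S} :=
  \bigcap_(C | convex F C && (A \subset C)) C.

Definition extreme F C p : bool := (p \in C) && (p \notin cclosure F (C :\ p)).

Definition cint F C : {set S} := [set p in C | ~~ extreme F C p].

Definition conv_count F (i j : nat) : nat :=
  #|[set C : {set S} | convex F C && (#|C| == i) && (#|cint F C| == j)]|.

End Antimatroid.

(* Main.v *)
Require Import Defs.
From mathcomp Require Import all_boot all_order all_algebra.
Import GRing.Theory Num.Theory.
Set Implicit Arguments. Unset Strict Implicit.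
Local Open Scope ring_scope.

Definition ker (S : finType) (F : {set {set S}}) (A : {set S}) : {set S} :=
  \bigcup_(X in F | X \subset A) X.

Lemma ker_in (S : finType) (F : {set {set S}}) (A : {set S}) :
  is_antimatroid F -> ker F A \in F.
Proof.
case=> F0 _ FU _; rewrite /ker.
by apply: (big_ind (fun X => X \in F)) => // X /andP[].
Qed.

Lemma ker_sub (S : finType) (F : {set {set S}}) (A : {set S}) : ker F A \subset A.
Proof. by apply/bigcupsP => X /andP[]. Qed.

Lemma sub_ker (S : finType) (F : {set {set S}}) (A : {set S}) X :
  X \in F -> X \subset A -> X \subset ker F A.
Proof. by move=> XF XA; apply: (bigcup_sup X); rewrite XF. Qed.

Lemma rank_ker (S : finType) (F : {set {set S}}) (A : {set S}) :
  is_antimatroid F -> am_rank F A = #|ker F A|.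
Proof.
move=> H; apply/eqP; rewrite eqn_leq; apply/andP; split.
  apply/bigmax_leqP => X /andP[XF XA]; apply: subset_leq_card; exact: sub_ker.
by apply: (leq_bigmax_cond (ker F A)); rewrite ker_in // ker_sub.
Qed.

Lemma augment (S : finType) (F : {set {set S}}) (K : {set S}) :
  is_antimatroid F -> K \in F -> forall Y, Y \in F -> ~~ (Y \subset K) ->
  exists2 x, x \in Y :\: K & x |: K \in F.
Proof.
move=> H KF Y.
have [m] := ubnP #|Y|; elim: m Y => // m IH Y hY YF YK.
case: H => F0 FT FU FA.
have Y0 : Y != set0 by apply: contraNneq YK => ->; exact: sub0set.
have [y yY Yy] := FA Y YF Y0.
case Yk: (Y :\ y \subset K).
  have yK : y \notin K.
    apply: contraNN YK => yK; apply/subsetP => z zY.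
    case: (z =P y) => [->//|/eqP zy]; apply: (subsetP Yk); by rewrite !inE zy.
  exists y; first by rewrite inE yK.
  have -> : y |: K = K :|: Y.
    apply/setP => z; rewrite !inE; apply/idP/idP.
      by case/orP => [/eqP->|->]; rewrite ?yY ?orbT.
    case/orP => [->|zY]; first by rewrite orbT.
    case: (z =P y) => [//|/eqP zy]; apply/orP; right; apply: (subsetP Yk).
    by rewrite !inE zy.
  exact: FU.
have [|x xY xF] := IH (Y :\ y) _ Yy (negbT Yk).
  by rewrite (cardsD1 y) yY in hY.
by exists x => //; move: xY; rewrite !inE => /and3P[-> _ ->].
Qed.

Lemma ccl_convex (S : finType) (F : {set {set S}}) (A : {set S}) :
  is_antimatroid F -> convex F (cclosure F A).
Proof.
case=> F0 _ FU _; rewrite /convex /cclosure setC_bigcap.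
by apply: (big_ind (fun X => X \in F)) => // X /andP[].
Qed.

Lemma ext_iff (S : finType) (F : {set {set S}}) (C : {set S}) p :
  is_antimatroid F -> convex F C -> p \in C ->
  extreme F C p = (~: (C :\ p) \in F).
Proof.
move=> H cC pC; rewrite /extreme pC /=.
have sub1 : C :\ p \subset cclosure F (C :\ p) by apply/bigcapsP => X /andP[].
have sub2 : cclosure F (C :\ p) \subset C.
  by apply: bigcap_inf; rewrite cC subsetDl.
apply/idP/idP => [pn | CF].
  have -> : C :\ p = cclosure F (C :\ p).
    apply/eqP; rewrite eqEsubset sub1 /=; apply/subsetP => z zc.
    rewrite !inE (subsetP sub2 _ zc) andbT; apply: contraNneq pn => zp; by move: zc; rewrite zp.
  exact: (ccl_convex (C :\ p) H).
have : cclosure F (C :\ p) \subset C :\ p by apply: bigcap_inf; rewrite /convex CF subxx.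
by move/subsetP/(_ p) => h; apply/negP => /h; rewrite !inE eqxx.
Qed.

Lemma compl_add (S : finType) (K : {set S}) x : ~: (~: K :\ x) = x |: K.
Proof. by rewrite setCD setCK setUC. Qed.

Lemma ker_eq (S : finType) (F : {set {set S}}) (K A : {set S}) :
  is_antimatroid F -> K \in F ->
  (ker F A == K) = (K \subset A) && (A :\: K \subset cint F (~: K)).
Proof.
move=> H KF; have cK : convex F (~: K) by rewrite /convex setCK.
apply/eqP/andP => [kA | [KA AKi]].
  have KA : K \subset A by rewrite -kA ker_sub.
  split=> //; apply/subsetP => x; rewrite !inE => /andP[xK xA].
  rewrite xK /= ext_iff ?inE // compl_add; apply/negP => xF.
  have : x |: K \subset ker F A by apply: sub_ker => //; rewrite subUset sub1set xA.
  by rewrite kA => /subsetP/(_ x); rewrite !inE eqxx (negPf xK) => /(_ isT).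
have Kk : K \subset ker F A by apply: sub_ker.
apply/eqP; rewrite eqEsubset Kk andbT; apply/negP => /negP nk.
have [x] := augment H KF (ker_in A H) nk.
rewrite inE => /andP[xK xk] xF.
have : x \in A :\: K by rewrite inE xK (subsetP (ker_sub F A)).
move/(subsetP AKi); rewrite inE => /andP[xc].
by rewrite ext_iff // compl_add xF.
Qed.

Lemma group_card (T : finType) (R : nmodType) (P : pred {set T}) (g : nat -> R) N :
  (forall B, P B -> (#|B| < N)%N) ->
  \sum_(B | P B) g #|B| = \sum_(m < N) g m *+ #|[set B | P B & #|B| == m]|.
Proof.
move=> HN.
transitivity (\sum_(m < N) \sum_(B in [set B | P B & #|B| == m]) g #|B|); last first.
  apply: eq_bigr => m _; rewrite -sumr_const; apply: eq_bigr => B.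
  by rewrite inE => /andP[_ /eqP->].
rewrite (exchange_big_dep P) /=; last by move=> m B _; rewrite inE => /andP[].
apply: eq_bigr => B PB.
rewrite (bigD1 (Ordinal (HN B PB))) /=; last by rewrite inE PB eqxx.
rewrite big1 ?addr0 // => m /andP[]; rewrite inE PB /= => /eqP hm.
by move/eqP; case; apply/val_inj; rewrite /= hm.
Qed.

Lemma sum_subsets (T : finType) (R : pzSemiRingType) (z : R) (I : {set T}) :
  \sum_(B : {set T} | B \subset I) z ^+ #|B| = (z + 1) ^+ #|I|.
Proof.
rewrite exprD1n (group_card (fun m => z ^+ m) (N := #|I|.+1)).
  by apply: eq_bigr => m _; rewrite cards_draws.
by move=> B BI; rewrite ltnS subset_leq_card.
Qed.

Lemma coefX1 (R : comNzRingType) s i :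
  (('X - 1 : {poly R}) ^+ s)`_i = (-1) ^+ (s - i) * ('C(s, i))%:R.
Proof.
rewrite addrC exprDn coef_sum.
have E k : (((-1) ^+ (s - k) * 'X ^+ k : {poly R}) *+ 'C(s, k))`_i
    = ((-1) ^+ (s - k) * (i == k)%:R) *+ 'C(s, k).
  rewrite coefMn; congr (_ *+ _).
  have -> : ((-1) ^+ (s - k) : {poly R}) = ((-1) ^+ (s - k))%:P.
    by rewrite rmorphXn rmorphN1.
  by rewrite coefCM coefXn.
under eq_bigr do rewrite E.
case: (leqP i s) => [iss|si].
  rewrite (bigD1 (Ordinal (iss : (i < s.+1)%N))) //= eqxx mulr1 mulr_natr.
  rewrite big1 ?addr0 // => k /eqP hk.
  have -> : (i == k) = false.
    by apply/negbTE/eqP => ik; apply: hk; apply/val_inj; rewrite /= ik.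
  by rewrite mulr0 mul0rn.
rewrite bin_small // mulr0 big1 // => k _.
have -> : (i == k) = false by apply/negbTE; rewrite neq_ltn (leq_trans (ltn_ord k)) ?orbT.
by rewrite mulr0 mul0rn.
Qed.

Lemma tutte_convex (S : finType) (F : {set {set S}}) :
  is_antimatroid F ->
  am_tutte F = \sum_(C : {set S} | convex F C)
     ('X - 1) ^+ #|C| * ('X ^+ #|cint F C|)%:P.
Proof.
move=> H; rewrite /am_tutte.
rewrite (partition_big (ker F) (fun K : {set S} => K \in F)) /=; last first.
  by move=> A _; exact: ker_in.
rewrite [RHS](reindex_inj (@setC_inj S)) /=.
apply: eq_big => [K|K KF]; first by rewrite /convex setCK.
have rT : am_rank F [set: S] = #|[set: S]|.
  have kT : ker F [set: S] = [set: S].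
    apply/eqP; rewrite eqEsubset subsetT /=.
    by apply: sub_ker => //; case: H.
  by rewrite rank_ker // kT.
set I := cint F (~: K).
have IK : I \subset ~: K by apply/subsetP => x; rewrite inE => /andP[].
rewrite (reindex_onto (fun B => K :|: B) (fun A => A :\: K)); last first.
  move=> A /= /eqP kA; apply/setP => z; rewrite !inE.
  case: (boolP (z \in K)) => //= zK.
  by rewrite (subsetP (ker_sub F A)) // kA.
transitivity (\sum_(B : {set S} | B \subset I)
    ('X - 1) ^+ #|~: K| * ((('X - 1) ^+ #|B|)%:P : {poly {poly int}})).  
  apply: eq_big => [B|B BI].
    rewrite /= ker_eq // subsetUl /= setDUl setDv set0U.
    apply/idP/idP => [/andP[h /eqP <-] // | BI].
    have -> : B :\: K = B by apply/setDidPl; rewrite disjoints_subset (subset_trans BI).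
    by rewrite BI eqxx.
  move: BI; rewrite ker_eq // subsetUl setDUl setDv set0U /= => /andP[h /eqP e].
  have BI : B \subset I by rewrite -e.
  have dB : [disjoint B & K] by rewrite disjoints_subset (subset_trans BI).
  have kB : ker F (K :|: B) = K.
    apply/eqP; rewrite ker_eq // subsetUl setDUl setDv set0U.
    by move/setDidPl: dB => ->.
  rewrite rT !rank_ker // kB.
  have -> : #|K :|: B| = (#|K| + #|B|)%N.
    rewrite cardsU; have -> : K :&: B = set0.
      by apply/eqP; rewrite setI_eq0 disjoint_sym.
    by rewrite cards0 subn0.
  by rewrite addKn [in #|~: K|]cardsCs setCK cardsT.
rewrite -mulr_sumr -rmorph_sum sum_subsets subrK.
by [].
Qed.
Unset Implicit Arguments.

Theorem lemma4p3 (S : finType) (F : {set {set S}}) (n : nat) :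
  is_antimatroid F -> #|S| = n ->
  forall i j : nat,
    tutte_coef F i j =
    \sum_(i <= s < n.+1) (-1) ^+ (s - i) * ('C(s, i))%:R * (conv_count F s j)%:R.
Proof.
move=> H Sn i j.
pose g (s : nat) : int := (-1) ^+ (s - i) * ('C(s, i))%:R.
rewrite /tutte_coef tutte_convex // coef_sum coef_sum.
transitivity (\sum_(C : {set S} | convex F C && (#|cint F C| == j)) g #|C|).
  rewrite big_mkcondr /=; apply: eq_bigr => C _.
  rewrite coefMC coefX1.
  have -> : ((-1) ^+ (#|C| - i) * ('C(#|C|, i))%:R : {poly int})
      = (g #|C|)%:P by rewrite rmorphM rmorphXn rmorphN1 rmorph_nat.
  rewrite coefCM coefXn eq_sym; case: eqP => _; by rewrite ?mulr1 ?mulr0.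
rewrite (group_card g (N := n.+1)); last first.
  by move=> C _; rewrite ltnS -Sn max_card.
rewrite big_geq_mkord /= [RHS]big_mkcond /=; apply: eq_bigr => s _.
case: leqP => [iss|si].
  rewrite mulr_natr /conv_count; congr (_ *+ _); apply: eq_card => C.
  by rewrite !inE; case: (convex F C); case: (#|C| == s); case: (#|cint F C| == j).
by rewrite /g bin_small // mulr0 mul0rn.
Qed.
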